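(* The map $\mathrm{End}(\mathbb{F}_p((t))^d)\to M_{d,\mathbb{Z}}(\mathbb{F}_p)$, $A\mapsto (A_{i,j})_{i,j\in\mathbb{Z}}$, is surjective and hence an isomorphism of rings.
   Context: $\mathrm{End}(\mathbb{F}_p((t))^d)$ is the ring of continuous group endomorphisms of $(\mathbb{F}_p((t))^d,+)$. For $n\in\mathbb{Z}$ let $\mathbb{V}_n=\{(a_1t^n,\dots,a_dt^n): a_r\in\mathbb{F}_p\}\cong\mathbb{F}_p^d$ and $\pi_n$ the projection onto $\mathbb{V}_n$ taking $t^n$-coefficients; the block matrix of $A$ is $A_{i,j}=\pi_i\circ A|_{\mathbb{V}_j}$, a $d\times d$ matrix over $\mathbb{F}_p$. $M_{d,\mathbb{Z}}(\mathbb{F}_p)$ is the ring of infinite block matrices $(A_{i,j})_{i,j\in\mathbb{Z}}$ with $d\times d$ blocks over $\mathbb{F}_p$ satisfying: (M1) for each $i$ there is $J_i$ with $A_{i,j}=0$ for $j>J_i$; (M2) for each $j$ there is $I_j$ with $A_{i,j}=0$ for $i<I_j$; (M3) there are $I,J$ with $A_{i,j}=0$ whenever $i<I$ and $j>J$; it is known that the block matrix of every continuous endomorphism lies in $M_{d,\mathbb{Z}}(\mathbb{F}_p)$ and that this map is a ring homomorphism. *)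

(* Defs.v *)
From HB Require Import structures.
From mathcomp Require Import all_boot all_order all_algebra.
Set Implicit Arguments. Unset Strict Implicit. Unset Printing Implicit Defensive.
Import Order.TTheory GRing.Theory Num.Theory.
Local Open Scope ring_scope.

(* An element of (F_p((t)))^d is encoded as its coefficient sequence
   x : int -> 'rV['F_p]_d, where x n = (t^n-coefficients of the d coordinates),
   subject to the Laurent condition (coefficients vanish below some index). *)
Definition seqv (p d : nat) := int -> 'rV['F_p]_d.

Definition laurent (p d : nat) (x : seqv p d) : Prop :=
  exists N : int, forall n : int, n < N -> x n = 0.

(* continuous group endomorphisms of (F_p((t))^d, +) for the t-adic topology:
   A maps Laurent series to Laurent series, is additive, and is continuous
   (for each x and each precision M there is a precision N such that
   agreement with x below index N forces agreement of images below M). *)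
Definition is_cont_end (p d : nat) (A : seqv p d -> seqv p d) : Prop :=
  [/\ (forall x, laurent x -> laurent (A x)),
      (forall x y, laurent x -> laurent y ->
         A (fun n => x n + y n) = (fun n => A x n + A y n)) &
      (forall x, laurent x -> forall M : int, exists N : int,
         forall y, laurent y -> (forall n, n < N -> y n = x n) ->
           forall n, n < M -> A y n = A x n)].

(* the element v t^j of V_j *)
Definition mono (p d : nat) (j : int) (v : 'rV['F_p]_d) : seqv p d :=
  fun n => if n == j then v else 0.

(* block A_{i,j} = pi_i o A |_{V_j}, as a d x d matrix acting on column
   coordinates: entry (r,s) is the r-th coordinate of the t^i-coefficient
   of A (e_s t^j). *)
Definition blk (p d : nat) (A : seqv p d -> seqv p d) (i j : int) : 'M['F_p]_d :=
  \matrix_(r < d, s < d) A (mono j (delta_mx 0 s)) i 0 r.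

(* the ring M_{d,Z}(F_p): conditions (M1), (M2), (M3) *)
Definition in_MdZ (p d : nat) (B : int -> int -> 'M['F_p]_d) : Prop :=
  [/\ (forall i : int, exists J : int, forall j : int, J < j -> B i j = 0),
      (forall j : int, exists I : int, forall i : int, i < I -> B i j = 0) &
      (exists I J : int, forall i j : int, i < I -> J < j -> B i j = 0)].

(* Main.v *)
Require Import Defs.
From HB Require Import structures.
From mathcomp Require Import all_boot all_order all_algebra zify.
From Stdlib Require Import ClassicalEpsilon FunctionalExtensionality.
Import Order.TTheory GRing.Theory Num.Theory.
Set Implicit Arguments. Unset Strict Implicit. Unset Printing Implicit Defensive.
Local Open Scope ring_scope.

Lemma Fp_natr p (c : 'F_p) : ((c : nat)%:R : 'F_p) = c. Proof. exact: natr_Zp. Qed.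

Lemma mono_laurent p d j (v : 'rV['F_p]_d) : laurent (mono j v).
Proof. exists j => n hn; rewrite /mono; case: eqP => // E; lia. Qed.

Lemma add_laurent p d (x y : seqv p d) : laurent x -> laurent y ->
  laurent (fun n => x n + y n).
Proof.
move=> [N1 h1] [N2 h2]; exists (Num.min N1 N2) => n hn.
rewrite h1 ?h2 ?addr0 //; lia.
Qed.

Lemma zero_laurent p d : laurent (fun _ : int => (0 : 'rV['F_p]_d)).
Proof. by exists 0. Qed.

Lemma A0 p d (A : seqv p d -> seqv p d) : is_cont_end A ->
  A (fun _ => 0) = (fun _ => 0).
Proof.
case=> _ hadd _; apply: functional_extensionality => n.
have := hadd _ _ (@zero_laurent p d) (@zero_laurent p d).
have -> : (fun _ : int => (0 : 'rV['F_p]_d) + 0) = (fun _ => 0).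
  by apply: functional_extensionality => ?; rewrite addr0.
move/(congr1 (fun f => f n)) => /= E.
by apply: (addrI (A (fun=> 0) n)); rewrite addr0 -E.
Qed.

Lemma mono_add p d j (a b : 'rV['F_p]_d) :
  mono j (a + b) = (fun n => mono j a n + mono j b n).
Proof. apply: functional_extensionality => n; rewrite /mono; case: eqP => //; by rewrite addr0. Qed.

Lemma mono0 p d j : mono j (0 : 'rV['F_p]_d) = (fun _ => 0).
Proof. apply: functional_extensionality => n; rewrite /mono; by case: eqP. Qed.

Lemma A_mono_sum p d (A : seqv p d -> seqv p d) : is_cont_end A ->
  forall j (I : Type) (r : seq I) (u : I -> 'rV['F_p]_d) n,
  A (mono j (\sum_(s <- r) u s)) n = \sum_(s <- r) A (mono j (u s)) n.
Proof.
move=> hA j I r u n; elim: r => [|a r IH].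
  by rewrite !big_nil mono0 (A0 hA).
rewrite !big_cons mono_add; case: (hA) => _ hadd _.
rewrite hadd /=; [congr (_ + _); exact: IH| exact: mono_laurent..].
Qed.

Lemma A_mono_nat p d (A : seqv p d -> seqv p d) : is_cont_end A ->
  forall j (v : 'rV['F_p]_d) (c : nat) n,
  A (mono j (v *+ c)) n = A (mono j v) n *+ c.
Proof.
move=> hA j v c n; elim: c => [|c IH].
  by rewrite !mulr0n mono0 (A0 hA).
rewrite !mulrS mono_add; case: (hA) => _ hadd _.
rewrite hadd /=; [congr (_ + _); exact: IH| exact: mono_laurent..].
Qed.

Lemma A_mono_e p d (A : seqv p d -> seqv p d) j s i :
  A (mono j (delta_mx 0 s)) i = \row_r blk A i j r s.
Proof. apply/rowP => r; rewrite !mxE /=. congr (A _ i _ r); apply: ord_inj; by case: (0 : 'I_1) => [[]]. Qed.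

Lemma A_mono_eq p d (A A' : seqv p d -> seqv p d) : is_cont_end A -> is_cont_end A' ->
  (forall i j : int, blk A i j = blk A' i j) ->
  forall j v, A (mono j v) = A' (mono j v).
Proof.
move=> hA hA' hb j v; apply: functional_extensionality => n.
rewrite (row_sum_delta v) !A_mono_sum //; apply: eq_bigr => s _.
rewrite -[v 0 s]Fp_natr scaler_nat !A_mono_nat //.
by rewrite !A_mono_e hb.
Qed.

Lemma fin_eq p d (A A' : seqv p d -> seqv p d) : is_cont_end A -> is_cont_end A' ->
  (forall i j : int, blk A i j = blk A' i j) ->
  forall (K : nat) (L : int) (y : seqv p d),
  (forall j, j < L \/ L + K%:Z <= j -> y j = 0) -> A y = A' y.
Proof.
move=> hA hA' hb; elim=> [|K IH] L y hy.
  have -> : y = (fun _ => 0).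
    apply: functional_extensionality => j; apply: hy; lia.
  by rewrite (A0 hA) (A0 hA').
pose y' := fun n => if n == L then 0 else y n.
have -> : y = (fun n => mono L (y L) n + y' n).
  apply: functional_extensionality => n; rewrite /mono /y'.
  by case: eqP => [->|]; rewrite ?addr0 ?add0r.
have ly' : laurent y'.
  exists L => n hn; rewrite /y'; case: eqP => // _; apply: hy; lia.
case: (hA) => _ hadd _; case: (hA') => _ hadd' _.
rewrite hadd ?hadd' ?mono_laurent //; last exact: mono_laurent.
rewrite (A_mono_eq hA hA' hb) (IH (L + 1) y') //.
move=> j hj; rewrite /y'; case: eqP => // hjL; apply: hy; lia.
exact: mono_laurent.
Qed.

Lemma inj_part p d (A A' : seqv p d -> seqv p d) : is_cont_end A -> is_cont_end A' ->
  (forall i j : int, blk A i j = blk A' i j) ->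
  forall x : seqv p d, laurent x -> A x = A' x.
Proof.
move=> hA hA' hb x lx; apply: functional_extensionality => n.
have [N0 hN0] := lx.
case: (hA) => _ _ hc; case: (hA') => _ _ hc'.
have [N1 h1] := hc x lx (n + 1).
have [N2 h2] := hc' x lx (n + 1).
pose N := Num.max N1 N2.
pose y := fun j => if j < N then x j else 0.
have ly : laurent y.
  exists N0 => j hj; rewrite /y; case: ifP => // _; apply: hN0; lia.
have hy : forall j, j < N1 -> y j = x j.
  move=> j hj; rewrite /y /N; case: ifP => // /negbT; lia.
have hy' : forall j, j < N2 -> y j = x j.
  move=> j hj; rewrite /y /N; case: ifP => // /negbT; lia.
rewrite -(h1 y ly hy n); last by lia.
rewrite -(h2 y ly hy' n); last by lia.
rewrite (@fin_eq _ _ A A' hA hA' hb `|N - N0|%N N0 y) //.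
move=> j hj; rewrite /y /N; case: ifP => // hjN; apply: hN0; lia.
Qed.

Lemma W_ext (V : zmodType) (t : int -> V) (U : int) (K m : nat) :
  (forall k : nat, (K <= k)%N -> t (U - k%:Z) = 0) ->
  \sum_(k < K) t (U - k%:Z) = \sum_(k < K + m) t (U - k%:Z).
Proof.
move=> h; elim: m => [|m IH]; first by rewrite addn0.
rewrite addnS big_ord_recr /= h ?addr0 ?leq_addr //.
Qed.

Lemma W_shift (V : zmodType) (t : int -> V) (U : int) (K m : nat) :
  (forall j, U < j -> t j = 0) ->
  \sum_(k < K) t (U - k%:Z) = \sum_(k < K + m) t ((U + m%:Z) - k%:Z).
Proof.
move=> h; elim: m => [|m IH]; first by rewrite addn0 addr0.
rewrite addnS big_ord_recl /= h; last by lia.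
rewrite add0r IH; apply: eq_bigr => k _; congr t; rewrite /bump add1n; lia.
Qed.

Definition cl p d (x : seqv p d) : int :=
  match excluded_middle_informative (laurent x) with
  | left H => proj1_sig (constructive_indefinite_description _ H)
  | right _ => 0
  end.

Lemma clP p d (x : seqv p d) : laurent x -> forall n, n < cl x -> x n = 0.
Proof.
rewrite /cl => H; case: excluded_middle_informative => // H'.
by case: constructive_indefinite_description.
Qed.

Definition Aop p d (B : int -> int -> 'M['F_p]_d) (Jf : int -> int) (x : seqv p d) : seqv p d :=
  fun n => \sum_(k < `|Jf n - cl x|%N.+1) x (Jf n - k%:Z) *m (B n (Jf n - k%:Z))^T.

Lemma Arep p d (B : int -> int -> 'M['F_p]_d) (Jf : int -> int) :
  (forall i j, Jf i < j -> B i j = 0) ->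
  forall (x : seqv p d) (N : int), (forall j, j < N -> x j = 0) ->
  forall n (U : int) (K : nat), Jf n <= U -> U - K%:Z < N ->
  Aop B Jf x n = \sum_(k < K) x (U - k%:Z) *m (B n (U - k%:Z))^T.
Proof.
move=> hJ x N hN n U K hU hK.
have lx : laurent x by exists N.
pose t := fun j => x j *m (B n j)^T.
rewrite /Aop.
have -> : \sum_(k < `|Jf n - cl x|%N.+1) x (Jf n - k%:Z) *m (B n (Jf n - k%:Z))^T
   = \sum_(k < `|Jf n - cl x|%N.+1) t (Jf n - k%:Z) by [].
have -> : \sum_(k < K) x (U - k%:Z) *m (B n (U - k%:Z))^T
   = \sum_(k < K) t (U - k%:Z) by [].
have eU : U = Jf n + `|U - Jf n|%N%:Z by lia.
rewrite (@W_shift _ t (Jf n) _ `|U - Jf n|%N); last first.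
  by move=> j hj; rewrite /t hJ // trmx0 mulmx0.
rewrite -eU.
set a := (`|Jf n - cl x|%N.+1 + `|U - Jf n|%N)%N.
rewrite (@W_ext _ t U a (K - a)); last first.
  move=> k hk; rewrite /t clP ?mul0mx //; lia.
rewrite (@W_ext _ t U K (a - K)); last first.
  move=> k hk; rewrite /t hN ?mul0mx //; lia.
have -> : (a + (K - a) = K + (a - K))%N by lia.
by [].
Qed.

Lemma fin_min p d (B : int -> int -> 'M['F_p]_d) :
  (forall j : int, exists I : int, forall i : int, i < I -> B i j = 0) ->
  forall (N : int) (k : nat), exists M : int,
    forall i : nat, (i <= k)%N -> forall n, n < M -> B n (N + i%:Z) = 0.
Proof.
move=> H2 N; elim=> [|k [M hM]].
  have [I hI] := H2 N; exists I => i; rewrite leqn0 => /eqP -> n hn.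
  by rewrite addr0 hI.
have [I hI] := H2 (N + k.+1%:Z); exists (Num.min M I) => i hi n hn.
case: (ltnP i k.+1) => hik.
  apply: hM => //; lia.
have -> : i = k.+1 by lia.
apply: hI; lia.
Qed.

Lemma fin_max (Jf : int -> int) (I0 : int) (k : nat) :
  exists Q : int, forall i : nat, (i <= k)%N -> Jf (I0 + i%:Z) <= Q.
Proof.
elim: k => [|k [Q hQ]].
  exists (Jf I0) => i; rewrite leqn0 => /eqP ->; by rewrite addr0.
exists (Num.max Q (Jf (I0 + k.+1%:Z))) => i hi.
case: (ltnP i k.+1) => hik.
  have := hQ i (hik); lia.
have -> : i = k.+1 by lia.
lia.
Qed.

Lemma surj_part p d (B : int -> int -> 'M['F_p]_d) : in_MdZ B ->
  exists A : seqv p d -> seqv p d,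
    is_cont_end A /\ forall i j : int, blk A i j = B i j.
Proof.
case=> H1 H2 [I0 [J0 H3]].
pose Jf := fun i => proj1_sig (constructive_indefinite_description _ (H1 i)).
have hJ : forall i j, Jf i < j -> B i j = 0.
  by move=> i j; rewrite /Jf; case: constructive_indefinite_description => J hJ /= /hJ.
exists (Aop B Jf); split; last first.
  move=> i j; apply/matrixP => r s; rewrite !mxE.
  pose U := Num.max (Jf i) j.
  have hm : forall n, n < j -> mono j (delta_mx 0 s) n = 0 :> 'rV['F_p]_d.
    move=> n hn; rewrite /mono; case: eqP => // E; lia.
  rewrite (@Arep _ _ B Jf hJ _ _ hm i U `|U - j|%N.+1); [|lia|lia].
  have k0lt : (`|U - j| < `|U - j|.+1)%N by [].
  rewrite (bigD1 (Ordinal k0lt)) //= big1.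
    have -> : U - `|U - j|%:Z = j by lia.
    rewrite addr0 /mono eqxx -rowE !mxE //.
  move=> k hk; rewrite /mono; case: eqP; last by rewrite mul0mx.
  move=> E; exfalso; move/eqP: hk; apply; apply: val_inj => /=; lia.
split.
-
  move=> x lx.
  have hN := clP lx.
  have [M hM] := fin_min H2 (cl x) `|J0 - cl x|.
  exists (Num.min M I0) => n hn.
  rewrite /Aop big1 // => k _.
  set j := Jf n - k%:Z.
  case: (ltP j (cl x)) => hj1; first by rewrite hN // mul0mx.
  case: (ltP J0 j) => hj2; first by rewrite H3 ?trmx0 ?mulmx0 //; lia.
  have -> : j = cl x + `|j - cl x|%N%:Z by lia.
  rewrite hM ?trmx0 ?mulmx0 //; lia.
-
  move=> x y lx ly; apply: functional_extensionality => n.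
  pose N := Num.min (cl x) (cl y).
  have hx : forall j, j < N -> x j = 0 by move=> j hj; apply: (clP lx); lia.
  have hy : forall j, j < N -> y j = 0 by move=> j hj; apply: (clP ly); lia.
  have hxy : forall j, j < N -> x j + y j = 0 by move=> j hj; rewrite hx ?hy ?addr0.
  have hU : Jf n <= Jf n by [].
  have hK : Jf n - (`|Jf n - N|%N.+1)%:Z < N by lia.
  rewrite (Arep hJ hxy hU hK) (Arep hJ hx hU hK) (Arep hJ hy hU hK).
  rewrite -big_split /=; apply: eq_bigr => k _; by rewrite mulmxDl.
-
  move=> x lx M.
  have [Q hQ] := fin_max Jf I0 `|M - I0|.
  exists ((Num.max J0 Q) + 1) => y ly hyx n hn.
  pose N := Num.min (cl x) (cl y).
  have hx : forall j, j < N -> x j = 0 by move=> j hj; apply: (clP lx); lia.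
  have hy : forall j, j < N -> y j = 0 by move=> j hj; apply: (clP ly); lia.
  have hU : Jf n <= Jf n by [].
  have hK : Jf n - (`|Jf n - N|%N.+1)%:Z < N by lia.
  rewrite (Arep hJ hx hU hK) (Arep hJ hy hU hK); apply: eq_bigr => k _.
  set j := Jf n - k%:Z.
  case: (ltP j (Num.max J0 Q + 1)) => hj; first by rewrite hyx.
  case: (ltP n I0) => hnI.
    by rewrite H3 ?trmx0 ?mulmx0 //; lia.
  rewrite hJ ?trmx0 ?mulmx0 //.
  have := hQ `|n - I0|%N; have -> : I0 + `|n - I0|%N%:Z = n by lia.
  move=> h; have := h ltac:(lia); lia.
Qed.

Unset Implicit Arguments.
Theorem mainTheorem8 (p d : nat) (pr_p : prime p) :
  (forall B : int -> int -> 'M['F_p]_d, in_MdZ B ->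
     exists A : seqv p d -> seqv p d,
       is_cont_end A /\ forall i j : int, blk A i j = B i j) /\
  (forall A A' : seqv p d -> seqv p d, is_cont_end A -> is_cont_end A' ->
     (forall i j : int, blk A i j = blk A' i j) ->
     forall x : seqv p d, laurent x -> A x = A' x).
Proof.
split; [exact: surj_part | exact: inj_part].
Qed.
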